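(* Let $\lambda$ be a partition with exactly two parts. Then $C_\lambda(q,t)=C_\lambda(t,q)$.
   Context: For a vector $\vec{k}=(k_1,\dots,k_n)$ of positive integers, $\lambda(\vec{k})$ denotes the partition obtained by sorting its entries decreasingly, and $|\vec{k}|=\sum k_i$. A $\vec{k}$-Dyck path is a word $D=\sigma_1\cdots\sigma_N$, $N=|\vec{k}|+n$, with $n$ red arrows and $|\vec{k}|$ blue arrows $W$, the $j$-th red arrow from the left being $S^{k_j}$ of value $k_j$, each $W$ of value $-1$; ranks $r_1=0$, $r_{m+1}=r_m+(\text{value of }\sigma_m)$ must all be $\ge0$. Starting rank $r(\sigma_m)=r_m$, end rank $\dot r(\sigma_m)=r_{m+1}$; $A<B$ means $A$ is left of $B$. $\mathcal{D}_{\vec{k}}$ is the set of $\vec{k}$-Dyck paths. $\operatorname{area}(D)=\sum_S r(S)$ over red arrows $S$. $\operatorname{dinv}(D)$ = (number of pairs (blue $W$, red $S$) with $W<S$ and $W$ sweeping $S$, i.e. $W$ meets $S$ when moved right past $S$ along a line of slope $0<\epsilon\ll1$, equivalently $r(S)\le r(W)\le\dot r(S)$) $+\sum_{S_i<S_j}\chi(r(S_i)\ge r(S_j)\ \&\ \dot r(S_j)>\dot r(S_i))(\dot r(S_j)-\dot r(S_i))+\sum_{S_i<S_j}\chi(r(S_i)<r(S_j)\ \&\ \dot r(S_j)<\dot r(S_i))(\dot r(S_i)-\dot r(S_j))$ over pairs of red arrows. For a partition $\lambda$, $C_\lambda(q,t)=\sum_{\vec{k}:\ \lambda(\vec{k})=\lambda}\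 \sum_{D\in\mathcal{D}_{\vec{k}}} q^{\operatorname{dinv}(D)}t^{\operatorname{area}(D)}$, the outer sum over all vectors $\vec{k}$ whose entries rearrange to $\lambda$. *)

(* Defs.v *)
From mathcomp Require Import all_boot all_order all_algebra.
Set Implicit Arguments. Unset Strict Implicit. Unset Printing Implicit Defensive.
Import Order.TTheory GRing.Theory Num.Theory.

(* A word is a seq bool: true = red arrow S, false = blue arrow W.
   Positions are indexed 0 .. N-1. *)

Fixpoint arrow_vals (k : seq nat) (w : seq bool) : seq int :=
  match w with
  | [::] => [::]
  | b :: w' => if b then (Posz (head 0%N k)) :: arrow_vals (behead k) w'
               else (-1)%R :: arrow_vals k w'
  end.

(* ranks r_1, ..., r_{N+1} (stored at indices 0 .. N) *)
Definition ranks (k : seq nat) (w : seq bool) : seq int :=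
  0%R :: scanl (fun a b => (a + b)%R) 0%R (arrow_vals k w).

Definition srank k w (m : nat) : int := nth 0%R (ranks k w) m.
Definition erank k w (m : nat) : int := nth 0%R (ranks k w) m.+1.
Definition is_red (w : seq bool) (m : nat) : bool := nth false w m.

Definition is_dyck (k : seq nat) (w : seq bool) : bool :=
  [&& size w == (sumn k + size k)%N, count id w == size k
    & all (fun r : int => (0 <= r)%R) (ranks k w)].

Fixpoint all_words (N : nat) : seq (seq bool) :=
  if N is N'.+1 then [seq b :: u | b <- [:: true; false], u <- all_words N']
  else [:: [::]].

Definition dyck_paths (k : seq nat) : seq (seq bool) :=
  [seq w <- all_words (sumn k + size k) | is_dyck k w].

Definition area (k : seq nat) (w : seq bool) : nat :=
  \sum_(m <- iota 0 (size w) | is_red w m) `|srank k w m|%N.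

Definition dinv (k : seq nat) (w : seq bool) : nat :=
  let N := size w in
  (\sum_(i <- iota 0 N) \sum_(j <- iota 0 N)
     [&& ~~ is_red w i, is_red w j, (i < j)%N,
         (srank k w j <= srank k w i)%R & (srank k w i <= erank k w j)%R]
   + \sum_(i <- iota 0 N) \sum_(j <- iota 0 N |
       [&& is_red w i, is_red w j, (i < j)%N,
           (srank k w j <= srank k w i)%R & (erank k w i < erank k w j)%R])
       `|erank k w j - erank k w i|%N
   + \sum_(i <- iota 0 N) \sum_(j <- iota 0 N |
       [&& is_red w i, is_red w j, (i < j)%N,
           (srank k w i < srank k w j)%R & (erank k w j < erank k w i)%R])
       `|erank k w i - erank k w j|%N)%N.

(* C_lambda(q,t), evaluated in an arbitrary commutative ring; the outer sum
   runs over the distinct rearrangements of lambda *)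
Definition C_lam (R : comNzRingType) (lam : seq nat) (q t : R) : R :=
  (\sum_(k <- permutations lam) \sum_(w <- dyck_paths k)
      q ^+ dinv k w * t ^+ area k w)%R.

Definition is_partition (lam : seq nat) : bool :=
  sorted geq lam && all (fun x => 0 < x)%N lam.

(* Main.v *)
Require Import Defs.
From mathcomp Require Import all_boot all_order all_algebra.
From mathcomp Require Import zify.
Set Implicit Arguments. Unset Strict Implicit. Unset Printing Implicit Defensive.
Import Order.TTheory GRing.Theory Num.Theory.

Definition Wd (p q r : nat) : seq bool :=
  nseq p false ++ true :: nseq q false ++ true :: nseq r false.

Lemma arrow_nseq k p s :
  arrow_vals k (nseq p false ++ s) = nseq p (-1)%R ++ arrow_vals k s.
Proof. by elim: p => //= p ->. Qed.

Lemma arrow_Wd k1 k2 p q r :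
  arrow_vals [:: k1; k2] (Wd p q r) =
  nseq p (-1)%R ++ Posz k1 :: nseq q (-1)%R ++ Posz k2 :: nseq r (-1)%R.
Proof.
rewrite /Wd arrow_nseq /= (arrow_nseq [:: k2]) /=.
by congr (_ ++ _ :: _ ++ _ :: _); elim: r => //= r ->.
Qed.

Definition addz := (fun a b : int => (a + b)%R).

Lemma scan_nseq (x : int) n :
  scanl addz x (nseq n (-1)%R) = [seq (x - m%:Z)%R | m <- iota 1 n].
Proof.
elim: n x => //= n IH x; rewrite IH.
rewrite /addz; congr (_ :: _).
rewrite (iotaDl 1 1) -map_comp; apply: eq_map => m /=; rewrite PoszD opprD addrA. done.
Qed.

Lemma fold_nseq (x : int) n :
  foldl addz x (nseq n (-1)%R) = (x - n%:Z)%R.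
Proof. elim: n x => /= [|n IH] x; rewrite ?IH /addz; lia. Qed.

Lemma ranks_Wd k1 k2 p q r :
  ranks [:: k1; k2] (Wd p q r) =
  0%R :: [seq (0 - m%:Z)%R | m <- iota 1 p] ++
   (0 - p%:Z + k1%:Z)%R :: [seq (0 - p%:Z + k1%:Z - m%:Z)%R | m <- iota 1 q] ++
   (0 - p%:Z + k1%:Z - q%:Z + k2%:Z)%R ::
      [seq (0 - p%:Z + k1%:Z - q%:Z + k2%:Z - m%:Z)%R | m <- iota 1 r].
Proof.
rewrite /ranks arrow_Wd -/addz scanl_cat scan_nseq fold_nseq /=.
rewrite scanl_cat scan_nseq fold_nseq /=.
by rewrite -[nseq r _]cats0 scanl_cat scan_nseq cats0.
Qed.

Lemma all_words_mem w : w \in all_words (size w).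
Proof.
elim: w => //= b w IH.
by rewrite !mem_cat; case: b; rewrite (map_f (cons _)) ?orbT.
Qed.

Lemma all_words_uniq N : uniq (all_words N).
Proof.
elim: N => //= N IH.
rewrite cats0 cat_uniq !map_inj_uniq ?IH //; try by move=> x y [].
rewrite andbT; apply/hasPn => x /mapP [u _ ->]; apply/mapP => [[v _]] //.
Qed.

Lemma size_Wd p q r : size (Wd p q r) = (p + q + r + 2)%N.
Proof. rewrite /Wd size_cat /= size_cat /= !size_nseq; lia. Qed.

Lemma count_Wd p q r : count id (Wd p q r) = 2.
Proof. by rewrite /Wd count_cat /= count_cat /= !count_nseq /= !mul0n. Qed.

Lemma split_true (s : seq bool) : (0 < count id s)%N ->
  exists p s', s = nseq p false ++ true :: s'.
Proof.
elim: s => //= b s IH; case: b => /= h.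
  by exists 0%N, s.
have [p [s' ->]] := IH h. by exists p.+1, s'.
Qed.

Lemma count0 (s : seq bool) : count id s = 0%N -> s = nseq (size s) false.
Proof. by elim: s => //= b s IH; case: b => //= /IH {1}->. Qed.

Lemma Wd_decomp (w : seq bool) : count id w = 2 ->
  exists p q r, w = Wd p q r.
Proof.
move=> h.
have [p [s1 e1]] := split_true (ltac:(rewrite h; done) : (0 < count id w)%N).
have h1 : count id s1 = 1%N.
  by move: h; rewrite e1 count_cat count_nseq /= mul0n add0n => -[].
have [q [s2 e2]] := split_true (ltac:(rewrite h1; done) : (0 < count id s1)%N).
have h2 : count id s2 = 0%N.
  by move: h1; rewrite e2 count_cat count_nseq /= mul0n add0n => -[].
exists p, q, (size s2). by rewrite e1 e2 {1}(count0 h2).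
Qed.

Section W.
Variables k1 k2 i : nat.
Hypothesis hi : (i <= k1)%N.
Local Notation r := (k1 + k2 - i)%N.
Local Notation w := (Wd 0 i r).
Local Notation k := [:: k1; k2].
Local Notation N := (i + r + 2)%N.

Lemma srank0 : nth 0%R (ranks k w) 0 = 0%R.
Proof. by []. Qed.

Lemma srank1 m : (0 < m <= i.+1)%N ->
  nth 0%R (ranks k w) m = (k1%:Z - (m.-1)%:Z)%R.
Proof.
move=> /andP [h1 h2].
rewrite ranks_Wd /=. case: m h1 h2 => [|m] //= _ h2.
case: m h2 => [|m] h2 /=; first lia.
rewrite nth_cat size_map size_iota ifT; last lia.
rewrite (nth_map 0%N) ?size_iota ?nth_iota; lia.
Qed.

Lemma srank2 m : (i.+1 < m <= N)%N ->
  nth 0%R (ranks k w) m = (k1%:Z - i%:Z + k2%:Z - (m - i.+2)%:Z)%R.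
Proof.
move=> /andP [h1 h2].
rewrite ranks_Wd /=. case: m h1 h2 => [|m] //= h1 h2.
case: m h1 h2 => [|m] h1 h2 /=; first lia.
rewrite nth_cat size_map size_iota ifF; last lia.
case E: (m - i)%N => [|m2] /=; first lia.
rewrite (nth_map 0%N) ?size_iota ?nth_iota; lia.
Qed.

Lemma is_red_W m : is_red w m = (m == 0%N) || (m == i.+1).
Proof.
rewrite /is_red /Wd /=. case: m => [|m] //=.
rewrite nth_cat size_nseq nth_nseq.
case: (ltngtP m i) => h /=; first lia.
  case E: (m - i)%N => [|m2] /=; first lia.
  rewrite nth_nseq; case: ifP => _; lia.
by rewrite h subnn /= eqxx.
Qed.

Lemma dyck_W : is_dyck k w.
Proof.
rewrite /is_dyck size_Wd count_Wd ranks_Wd.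
apply/and3P; split; first (apply/eqP; rewrite /=; lia); first by [].
rewrite /= all_cat /= !all_map.
apply/and3P; split; try lia; apply/allP => m; rewrite mem_iota /=; lia.
Qed.

End W.

Lemma dyck_mem k1 k2 w : (w \in dyck_paths [:: k1; k2]) =
  (w \in [seq Wd 0 i (k1 + k2 - i) | i <- iota 0 k1.+1]).
Proof.
rewrite /dyck_paths mem_filter; apply/andP/mapP.
- move=> [/and3P [hs hc ha] _].
  have [p [q [r e]]] := Wd_decomp (eqP hc : count id w = 2%N); subst w.
  rewrite ranks_Wd in ha.
  clear hc; case: p => [|p] in ha hs *; last first.
    by move: ha; rewrite /=.
  move: ha; rewrite /= all_cat all_map => /andP [ha _].
  have hq : (q <= k1)%N.
    case: (leqP q k1) => // hq.
    have := allP ha k1.+1; rewrite mem_iota /= => /(_ ltac:(lia)); lia.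
  exists q; first by rewrite inE mem_iota; lia.
  move: hs; rewrite size_Wd /= => /eqP hs.
  by congr Wd; lia.
- move=> [j hj ->]; move: hj; rewrite mem_iota => /andP [_ hj].
  split; first by apply: dyck_W; lia.
  have e : (sumn [:: k1; k2] + size [:: k1; k2] = size (Wd 0 j (k1 + k2 - j)))%N.
    by rewrite size_Wd /=; lia.
  by rewrite e; exact: all_words_mem.
Qed.

Lemma dyck_perm k1 k2 : perm_eq (dyck_paths [:: k1; k2])
  [seq Wd 0 i (k1 + k2 - i) | i <- iota 0 k1.+1].
Proof.
apply: uniq_perm; last exact: dyck_mem.
  by rewrite /dyck_paths filter_uniq // all_words_uniq.
rewrite map_inj_in_uniq ?iota_uniq // => x y hx hy e.
move: hx hy; rewrite !mem_iota /= => hx hy.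
have := @is_red_W k1 k2 x ltac:(lia) x.+1; rewrite e (@is_red_W k1 k2 y ltac:(lia)) eqxx orbT.
move=> /esym; lia.

Qed.

Lemma filter_nil (T : eqType) (a : pred T) (s : seq T) :
  (forall x, x \in s -> ~~ a x) -> filter a s = [::].
Proof.
elim: s => //= x s IH H; rewrite (negbTE (H x (mem_head _ _))) IH // => y yin.
by apply: H; rewrite inE yin orbT.
Qed.

Lemma count_range lo hi N :
  (\sum_(x <- iota 0 N) ((lo <= x) && (x < hi)) = minn hi N - lo)%N.
Proof.
elim: N => [|N IH]; first by rewrite big_nil; lia.
rewrite -addn1 iotaD big_cat big_seq1 IH /=.
case: (leqP lo N) => h1; case: (ltnP N hi) => h2 /=; lia.
Qed.

Section Sums.
Variables k1 k2 i : nat.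
Hypothesis hi : (i <= k1)%N.
Local Notation r := (k1 + k2 - i)%N.
Local Notation w := (Wd 0 i r).
Local Notation k := [:: k1; k2].
Local Notation N := (i + r + 2)%N.

Lemma sum_red (F : nat -> nat) :
  (\sum_(m <- iota 0 N) (if is_red w m then F m else 0) = F 0 + F i.+1)%N.
Proof.
rewrite -big_mkcond -big_filter.
have -> : [seq m <- iota 0 N | is_red w m] = [:: 0%N; i.+1].
  have -> : N = (1 + i + 1 + r)%N by lia.
  rewrite (eq_filter (@is_red_W k1 k2 i hi)) !iotaD !filter_cat !add0n.
  rewrite (filter_nil (s := iota 1 i)) ?(filter_nil (s := iota (1 + i + 1) r)) /= ?eqxx ?orbT /=; try by move=> x; rewrite mem_iota; lia.
  by rewrite add1n.
by rewrite unlock /= addn0.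
Qed.

Lemma sum_red2 (H : nat -> nat -> bool) (G : nat -> nat -> nat) :
  (\sum_(x <- iota 0 N) \sum_(j <- iota 0 N |
      [&& is_red w x, is_red w j, (x < j)%N & H x j]) G x j
   = if H 0%N i.+1 then G 0%N i.+1 else 0)%N.
Proof.
rewrite (eq_bigr (fun x => if is_red w x then
   (if (x < i.+1)%N && H x i.+1 then G x i.+1 else 0) else 0)%N).
  by rewrite sum_red /= ltnn /= addn0.
move=> x _; rewrite big_mkcond.
rewrite (eq_bigr (fun j => if is_red w j then
   (if [&& is_red w x, (x < j)%N & H x j] then G x j else 0) else 0)%N).
  by rewrite sum_red ltn0 andbF /= add0n; case: (is_red w x).
by move=> j _; case: (is_red w j); case: (is_red w x).
Qed.

Lemma area_W : area k w = (k1 - i)%N.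
Proof.
rewrite /area size_Wd add0n big_mkcond sum_red /srank srank0.
rewrite (@srank1 k1 k2 i hi); lia.
Qed.

Lemma dinv_W : dinv k w = if (i < k1)%N then i else k2.
Proof.
rewrite /dinv size_Wd add0n !sum_red2.
have s1 : srank k w i.+1 = (k1%:Z - i%:Z)%R.
  by rewrite /srank (@srank1 k1 k2 i hi); lia.
have e1 : erank k w i.+1 = (k1%:Z - i%:Z + k2%:Z)%R.
  by rewrite /erank (@srank2 k1 k2 i hi); lia.
have s0 : srank k w 0 = 0%R by [].
have e0 : erank k w 0 = Posz k1.
  by rewrite /erank (@srank1 k1 k2 i hi); lia.
rewrite s1 e1 s0 e0.
rewrite (eq_bigr (fun x => [&& ~~ is_red w x, (x < i.+1)%N,
    (srank k w i.+1 <= srank k w x)%R & (srank k w x <= erank k w i.+1)%R] : nat)).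
  rewrite big_seq (eq_bigr (fun x => ((maxn 1 (i.+1 - k2) <= x) && (x < i.+1))%N : nat)).
    rewrite -big_seq count_range.
    case: ifP => h1; case: ifP => h2; case: ifP => h3; lia.
  move=> x; rewrite mem_iota => /andP [_ hx].
  rewrite s1 e1 (@is_red_W k1 k2 i hi).
  case: x hx => [|x] hx; first by rewrite /srank /=; lia.
  case: (leqP x.+1 i.+1) => hx2.
    rewrite /srank (@srank1 k1 k2 i hi) //=; lia.
  by rewrite /= ltnNge (ltnW hx2) /= andbF; lia.
move=> x _.
rewrite (eq_bigr (fun j => if is_red w j then
   [&& ~~ is_red w x, (x < j)%N, (srank k w j <= srank k w x)%R
      & (srank k w x <= erank k w j)%R] : nat else 0%N)).
  by rewrite sum_red ltn0 andbF /= add0n.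
by move=> j _; case: (is_red w j); case: (is_red w x).
Qed.

End Sums.

Lemma dyck_sum (R : comNzRingType) k1 k2 (q t : R) :
  (\sum_(w <- dyck_paths [:: k1; k2])
      q ^+ dinv [:: k1; k2] w * t ^+ area [:: k1; k2] w =
   \sum_(0 <= i < k1) q ^+ i * t ^+ (k1 - i) + q ^+ k2)%R.
Proof.
rewrite (perm_big _ (dyck_perm k1 k2)) big_map.
rewrite -[iota 0 k1.+1]/(index_iota 0 k1.+1) big_nat_recr //=.
rewrite (@area_W k1 k2 k1) // (@dinv_W k1 k2 k1) // ltnn subnn expr0 mulr1.
congr (_ + _)%R; apply: eq_big_nat => j /andP [_ hj].
by rewrite (@area_W k1 k2 j) ?(@dinv_W k1 k2 j) ?hj // ltnW.
Qed.

Lemma Psym (R : comNzRingType) n (q t : R) :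
  (\sum_(0 <= i < n) q ^+ i * t ^+ (n - i) + q ^+ n =
   \sum_(0 <= i < n) t ^+ i * q ^+ (n - i) + t ^+ n)%R.
Proof.
have E : forall x y : R, (\sum_(0 <= i < n) x ^+ i * y ^+ (n - i) + x ^+ n =
   \sum_(0 <= i < n.+1) x ^+ i * y ^+ (n - i))%R.
  by move=> x y; rewrite big_nat_recr //= subnn expr0 mulr1.
rewrite !E big_nat_rev /=; apply: eq_big_nat => j /andP [_ hj].
rewrite add0n subSS subKn 1?mulrC //.
Qed.

Theorem mainTheorem3 (R : comNzRingType) (lam : seq nat) :
  is_partition lam -> size lam = 2 ->
  forall q t : R, C_lam lam q t = C_lam lam t q.
Proof.
move=> _ hsz q t.
case: lam hsz => [|a [|b [|c l]]] // _.
rewrite /C_lam.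
case: (eqVneq a b) => [<-|ab].
  rewrite /permutations /tally /= /incr_tally /= eqxx /=.
  by rewrite !big_cons !big_nil !addr0 !dyck_sum Psym.
rewrite /permutations /tally /= /incr_tally /= eq_sym (negbTE ab) /=.
rewrite !big_cons !big_nil !addr0 !dyck_sum.
have E : forall X Y x y : R, (X + y + (Y + x) = (X + x) + (Y + y))%R.
  by move=> X Y x y; rewrite -!addrA; congr (_ + _)%R; rewrite addrCA [RHS]addrCA (addrC y).
by rewrite E [RHS]E (Psym a q t) (Psym b q t).
Qed.
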